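(* Let $G(t)=\sum_{k=0}^\infty a_k\frac{t^{k+1}}{k+1}$ be a strictly increasing real analytic function with $a_0=1$, whose coefficients do not depend on $\alpha$, and such that $\ln_G(x):=G(\ln x)$ is continuous, strictly increasing and strictly concave on $(0,\infty)$. For $\alpha>1$ and probability distributions $p=(p_1,\dots,p_W)$ define $Z_{G,\alpha}(p):=\frac{\ln_G(\sum_{i=1}^W p_i^{\alpha})}{1-\alpha}$. Then $Z_{G,\alpha}$ is Schur concave: whenever $p$ and $r$ are probability distributions on $W$ points with $p\preceq r$, one has $Z_{G,\alpha}(p)\ge Z_{G,\alpha}(r)$.
   Context: Majorization: for $\mathbf a,\mathbf b\in\mathbb{R}^n$ with entries sorted in decreasing order $a_1\ge\dots\ge a_n$, $b_1\ge\dots\ge b_n$, one writes $\mathbf b\preceq\mathbf a$ (a majorizes b) if $\sum_{i=1}^k a_i\ge\sum_{i=1}^k b_i$ for $k=1,\dots,n-1$ and $\sum_{i=1}^n a_i=\sum_{i=1}^n b_i$. *)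

(* Defs.v *)
From HB Require Import structures.
From mathcomp Require Import all_boot all_order all_algebra.
From mathcomp Require Import all_classical all_reals all_analysis.
Set Implicit Arguments. Unset Strict Implicit. Unset Printing Implicit Defensive.
Import Order.TTheory GRing.Theory Num.Theory.
Import numFieldNormedType.Exports.
Local Open Scope ring_scope.
Local Open Scope classical_set_scope.

Definition real_analytic (R : realType) (f : R -> R) : Prop :=
  forall x0 : R, exists c : nat -> R, exists r : R, 0 < r /\
    forall x : R, `|x - x0| < r ->
      series (fun k => c k * (x - x0) ^+ k) @ \oo --> f x.

Definition lnG (R : realType) (G : R -> R) (x : R) : R := G (ln x).

Definition prob_dist (R : realType) (W : nat) (p : 'I_W -> R) : Prop :=
  (forall i, 0 <= p i) /\ \sum_(i < W) p i = 1.

Definition vec_seq (R : realType) (W : nat) (p : 'I_W -> R) : seq R :=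
  [seq p i | i : 'I_W].
Definition sort_dec (R : realType) (s : seq R) : seq R := sort (>=%R) s.

(* majorized b a  <->  b ≼ a  (a majorizes b), for vectors of length n *)
Definition majorized (R : realType) (n : nat) (b a : 'I_n -> R) : Prop :=
  let a' := sort_dec (vec_seq a) in
  let b' := sort_dec (vec_seq b) in
  (forall k : nat, (1 <= k <= n - 1)%N ->
     \sum_(i < k) b'`_i <= \sum_(i < k) a'`_i) /\
  \sum_(i < n) a'`_i = \sum_(i < n) b'`_i.

Definition Z_G (R : realType) (G : R -> R) (alpha : R) (W : nat)
  (p : 'I_W -> R) : R :=
  lnG G (\sum_(i < W) powR (p i) alpha) / (1 - alpha).

(* Main.v *)
Require Import Defs.
From HB Require Import structures.
From mathcomp Require Import all_boot all_order all_algebra.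
From mathcomp Require Import all_classical all_reals all_analysis.
From mathcomp Require Import ring lra.
Import Order.TTheory GRing.Theory Num.Theory.
Import numFieldNormedType.Exports.
Local Open Scope ring_scope.
Local Open Scope classical_set_scope.

Lemma tangent_powR (R : realType) (al x y : R) : 1 < al -> 0 <= x -> 0 <= y ->
  powR y al + al * powR y (al - 1) * (x - y) <= powR x al.
Proof.
move=> a1 x0 y0.
have al0 : 0 < al by apply: lt_trans a1.
have a10 : 0 < al - 1 by rewrite subr_gt0.
set q := al / (al - 1).
have q0 : 0 < q by rewrite divr_gt0.
have pq : al^-1 + q^-1 = 1.
  rewrite /q invf_div; field; rewrite ?gt_eqF //.
have := conjugate_powR x0 (powR_ge0 y (al - 1)) al0 q0 pq.
have -> : powR (powR y (al - 1)) q = powR y al.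
  by rewrite -powRrM /q mulrCA divff ?gt_eqF // mulr1.
have hy : powR y (al - 1) * y = powR y al by rewrite mulrC mulr_powRB1.
move=> H.
have H2 : al * (x * powR y (al - 1)) <= powR x al + (al - 1) * powR y al.
  have := ler_wpM2l (ltW al0) H.
  move=> H3; apply: (le_trans H3); rewrite mulrDr.
  rewrite le_eqVlt; apply/orP; left; apply/eqP; rewrite /q; field; rewrite ?gt_eqF //.
rewrite -hy. set u := powR y (al - 1). move: H2; rewrite -hy -/u => H2. nra.
Qed.

Lemma abel_sum (R : realType) (d x : nat -> R) n :
  \sum_(i < n.+1) d i * x i = d n * \sum_(i < n.+1) x i
     + \sum_(i < n) (d i - d i.+1) * \sum_(j < i.+1) x j.
Proof.
elim: n => [|n IH]; first by rewrite !big_ord1 big_ord0 addr0.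
rewrite big_ord_recr /= IH [\sum_(i < n.+2) x i]big_ord_recr /=.
rewrite [\sum_(i < n.+1) (d i - d i.+1) * _]big_ord_recr /=.
ring.
Qed.

Lemma karamata_seq (R : realType) (al : R) n (a b : seq R) : 1 < al ->
  size a = n.+1 -> size b = n.+1 ->
  sorted >=%R a -> sorted >=%R b ->
  (forall i, 0 <= a`_i) -> (forall i, 0 <= b`_i) ->
  (forall k : nat, (1 <= k <= n)%N -> \sum_(i < k) b`_i <= \sum_(i < k) a`_i) ->
  \sum_(i < n.+1) a`_i = \sum_(i < n.+1) b`_i ->
  \sum_(i < n.+1) powR b`_i al <= \sum_(i < n.+1) powR a`_i al.
Proof.
move=> a1 sa sb soa sob a0 b0 hk htot.
set d := fun i => al * powR b`_i (al - 1).
rewrite -subr_ge0 -sumrB.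
apply: (@le_trans _ _ (\sum_(i < n.+1) d i * (a`_i - b`_i))); last first.
  apply: ler_sum => i _; rewrite lerBrDl /d; exact: tangent_powR.
rewrite (@abel_sum _ d (fun i => a`_i - b`_i)).
have -> : \sum_(i < n.+1) (a`_i - b`_i) = 0 by rewrite sumrB htot subrr.
rewrite mulr0 add0r; apply: sumr_ge0 => i _.
apply: mulr_ge0.
  rewrite subr_ge0 /d; apply: ler_wpM2l; first by apply: ltW; apply: lt_trans a1.
  have ltr : {in predT & &, transitive (>=%R : rel R)}.
    by move=> y x z _ _ _ h1 h2; apply: le_trans h2 h1.
  have hb : b`_i.+1 <= b`_i.
    have := @sorted_ltn_nth_in R predT (>=%R) ltr 0 b (all_predT _) sob i i.+1.
    by rewrite !inE sb ltnS ltnS ltnW //= => H; apply: H.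
  apply: ge0_ler_powR => //; rewrite ?nnegrE //.
  by rewrite subr_ge0 ltW.

rewrite sumrB subr_ge0; apply: hk; rewrite ltn_ord andbT //.
Qed.

Lemma sum_sort (R : realType) (f : R -> R) W (p : 'I_W -> R) :
  \sum_(i < W) f (p i) = \sum_(i < W) f (sort_dec (vec_seq p))`_i.
Proof.
have -> : \sum_(i < W) f (p i) = \sum_(x <- vec_seq p) f x.
  by rewrite /vec_seq big_map big_enum.
rewrite /sort_dec -(perm_big _ (permEl (perm_sort >=%R (vec_seq p)))) (big_nth 0) big_mkord.
by rewrite size_sort size_map size_enum_ord.
Qed.

Lemma sort_ge0 (R : realType) W (p : 'I_W -> R) : (forall i, 0 <= p i) ->
  forall k, 0 <= (sort_dec (vec_seq p))`_k.
Proof.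
move=> p0 k; case: (ltnP k (size (sort_dec (vec_seq p)))) => h.
  have := mem_nth 0 h; rewrite mem_sort => /mapP[j _ ->]; exact: p0.
by rewrite nth_default.
Qed.

Lemma sort_sorted_dec (R : realType) W (p : 'I_W -> R) :
  sorted >=%R (sort_dec (vec_seq p)).
Proof. by apply: sort_sorted => x y; rewrite /= le_total. Qed.

Lemma size_sort_dec (R : realType) W (p : 'I_W -> R) :
  size (sort_dec (vec_seq p)) = W.
Proof. by rewrite size_sort size_map size_enum_ord. Qed.

Theorem mainTheorem7 (R : realType) (G : R -> R) (a : nat -> R) :
  (* G(t) = sum_k a_k t^(k+1)/(k+1) (power series around 0) *)
  (exists r : R, 0 < r /\ forall t : R, `|t| < r ->
     series (fun k => a k * t ^+ k.+1 / k.+1%:R) @ \oo --> G t) ->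
  real_analytic G ->
  a 0%N = 1 ->
  (* G strictly increasing *)
  (forall s t : R, s < t -> G s < G t) ->
  (* ln_G continuous, strictly increasing, strictly concave on (0,oo) *)
  (forall x : R, 0 < x -> {for x, continuous (lnG G)}) ->
  (forall x y : R, 0 < x -> x < y -> lnG G x < lnG G y) ->
  (forall x y l : R, 0 < x -> 0 < y -> x != y -> 0 < l < 1 ->
     l * lnG G x + (1 - l) * lnG G y < lnG G (l * x + (1 - l) * y)) ->
  forall alpha : R, 1 < alpha ->
  forall (W : nat) (p r : 'I_W -> R),
    prob_dist p -> prob_dist r -> majorized p r ->
    Z_G G alpha r <= Z_G G alpha p.
Proof.
move=> _ _ _ _ _ Hinc _ al a1 W p r [p0 p1] [r0 r1] [hk htot].
case: W p r p0 p1 r0 r1 hk htot => [|n] p r p0 p1 r0 r1 hk htot.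
  by move: p1; rewrite big_ord0 => /eqP; rewrite eq_sym oner_eq0.
have al0 : 0 < al by apply: lt_trans a1.
have Hle : \sum_(i < n.+1) powR (p i) al <= \sum_(i < n.+1) powR (r i) al.
  rewrite (@sum_sort _ (fun x => powR x al) _ p) (@sum_sort _ (fun x => powR x al) _ r).
  apply: karamata_seq => //.
  - exact: size_sort_dec.
  - exact: size_sort_dec.
  - exact: sort_sorted_dec.
  - exact: sort_sorted_dec.
  - exact: sort_ge0.
  - exact: sort_ge0.
  - by move=> k hk'; apply: hk; rewrite subn1 /=.
have Hpos : 0 < \sum_(i < n.+1) powR (p i) al.
  rewrite lt_neqAle sumr_ge0 ?andbT; last by move=> i _; exact: powR_ge0.
  apply/negP => /eqP /esym H.
  have H0 := psumr_eq0P (fun i _ => powR_ge0 (p i) al) H.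
  move: p1; rewrite big1 => [/eqP|i _]; first by rewrite eq_sym oner_eq0.
  apply: (@powR_eq0_eq0 _ _ al); exact: H0.
have HlnG : lnG G (\sum_(i < n.+1) powR (p i) al) <= lnG G (\sum_(i < n.+1) powR (r i) al).
  move: Hle; rewrite le_eqVlt => /orP[/eqP -> //|H].
  exact/ltW/Hinc.
rewrite /Z_G; apply: ler_wnM2r => //.
by rewrite invr_le0 subr_le0 ltW.
Qed.
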